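(* Let $\tau_n\in\Gamma_n$ be a fixed rooted planar tree, let $\ell_n$ be a uniformly random admissible labeling of $\tau_n$, and let $(S^{\tau_n}_m)_{m=0}^n$ be the conditioned walk defined below. Then $$\big(S^{\tau_n}_m\big)_{m=0}^n\overset{d}{=}\big(\ell_n(c_m)\big)_{m=0}^n .$$
   Context: A rooted planar tree is a finite rooted plane (ordered) tree; $\Gamma_n$ is the set of rooted planar trees with $n$ edges. Vertices at even distance from the root (including the root) are white, those at odd distance are black; $V^\bullet(\tau)$ denotes the black vertices. For a black vertex $u$ of degree $k$ (number of neighbours), let $u_0$ be its parent and $u_1,\dots,u_{k-1}$ its children in clockwise order, $u_k=u_0$. An admissible labeling is a map $\ell$ from the white vertices to $\mathbb Z$ with $\ell(\text{root})=0$ and $\ell(u_{j+1})\ge \ell(u_j)-1$ for every black $u$ and $0\le j\le k-1$. White contour sequence: the clockwise contour walk around $\tau_n$ from the root has $2n$ steps alternately visiting white and black vertices; $c_m$ is the white vertex visited at step $2m$, $m=0,\dots,n$. For black $v$, $B_v\subseteq\{1,\dots,n\}$ is the set of $i$ such that the contour walk passes through $v$ between its visits to $c_{i-1}$ and $c_i$. Let $\xi_i$ be i.i.d. with $\mathbb P(\xi_1=i)=2^{-i-2}$, $i\ge-1$; $S_m=\sum_{i\le m}\xi_i$, $S_B=\sum_{i\in B}\xi_i$; $(S^{\tau_n}_m)_{m=0}^n$ has the law of $(S_m)_{m=0}^n$ conditioned on $\{S_{B_v}=0\ \forall v\in V^\bullet(\tau_n)\}$. *)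

(* Defs.v *)
From Stdlib Require Import Reals List ZArith Arith Lia.
Import ListNotations.
Open Scope R_scope.

Inductive tree : Type := Node : list tree -> tree.

Fixpoint edges (t : tree) : nat :=
  match t with Node ts => list_sum (map (fun c => S (edges c)) ts) end.

(* vertices are addressed by paths from the root: list of child indices
   (0-based, in clockwise/planar order). [sub t p] is the subtree at p. *)
Fixpoint sub (t : tree) (p : list nat) : option tree :=
  match p with
  | [] => Some t
  | i :: p' => match t with Node ts =>
      match nth_error ts i with Some c => sub c p' | None => None end end
  end.

Definition is_vertex (t : tree) (v : list nat) : Prop := sub t v <> None.
Definition is_white (t : tree) (v : list nat) : Prop :=
  is_vertex t v /\ Nat.even (length v) = true.
Definition is_black (t : tree) (v : list nat) : Prop :=
  is_vertex t v /\ Nat.odd (length v) = true.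

(* clockwise contour walk of the subtree t rooted at path p:
   visits 2*edges t + 1 vertices, starting and ending at p *)
Fixpoint contour (t : tree) (p : list nat) : list (list nat) :=
  match t with Node ts =>
    p :: (fix go (cs : list tree) (i : nat) : list (list nat) :=
            match cs with
            | [] => []
            | c :: cs' => contour c (p ++ [i]) ++ [p] ++ go cs' (S i)
            end) ts 0%nat
  end.

Definition cstep (t : tree) (k : nat) : list nat := nth k (contour t []) [].

(* white contour sequence c_0, ..., c_n *)
Definition cseq (t : tree) : list (list nat) :=
  map (fun m => cstep t (2 * m)%nat) (seq 0%nat (S (edges t))).

(* Admissible labelings.  A labeling is a map from the white vertices to Z;
   we represent it by a function on paths which is 0 outside the white vertices. *)
Definition admissible (t : tree) (l : list nat -> Z) : Prop :=
  l [] = 0%Z /\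
  (forall v, ~ is_white t v -> l v = 0%Z) /\
  (forall u ts, Nat.odd (length u) = true -> sub t u = Some (Node ts) ->
     (* u_0 = parent, u_j = j-th child (j = 1..k-1), u_k = u_0, k = length ts + 1 *)
     let w := fun j => if orb (j =? 0)%nat (j =? S (length ts))%nat then removelast u
                       else u ++ [(j - 1)%nat] in
     forall j, (j < S (length ts))%nat -> (l (w (S j)) >= l (w j) - 1)%Z).

Definition has_card {A : Type} (P : A -> Prop) (k : nat) : Prop :=
  exists s : list A, NoDup s /\ length s = k /\ forall a, In a s <-> P a.

Definition pxi (z : Z) : R :=
  if (z <? -1)%Z then 0 else (/ 2) ^ (Z.to_nat (z + 2)).

Definition pmf (xi : list Z) : R := fold_right (fun z acc => pxi z * acc) 1 xi.

Fixpoint psums (acc : Z) (xi : list Z) : list Z :=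
  acc :: match xi with [] => [] | z :: r => psums (acc + z) r end.
Definition walk (xi : list Z) : list Z := psums 0%Z xi.

(* S_{B_v} = sum of xi_i over i in B_v, where
   B_v = { i in 1..n : the contour walk is at v at step 2i-1 } *)
Definition blocksum (t : tree) (xi : list Z) (v : list nat) : Z :=
  fold_right Z.add 0%Z
    (map (fun i => if list_eq_dec Nat.eq_dec (cstep t (2 * i - 1)%nat) v
                   then nth (i - 1)%nat xi 0%Z else 0%Z)
         (seq 1%nat (edges t))).

(* conditioning event { S_{B_v} = 0 for all black v } (every vertex occurs in the contour) *)
Definition cond_event (t : tree) (xi : list Z) : bool :=
  forallb (fun v => if Nat.odd (length v) then Z.eqb (blocksum t xi v) 0 else true)
          (contour t []).

Fixpoint box (n N : nat) : list (list Z) :=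
  match n with
  | O => [[]]
  | S n' => flat_map (fun z => map (cons z) (box n' N))
                     (map (fun k => (Z.of_nat k - Z.of_nat N)%Z) (seq 0%nat (2 * N + 1)%nat))
  end.

(* [prob n A p]: the event A (on (xi_1..xi_n) in Z^n) has probability p, i.e.
   the series of pmf over A (exhausted by boxes [-N,N]^n) converges to p *)
Definition prob (n : nat) (A : list Z -> bool) (p : R) : Prop :=
  Un_cv (fun N => fold_right Rplus 0
                    (map (fun xi => if A xi then pmf xi else 0) (box n N))) p.

Definition list_Z_eqb (x y : list Z) : bool :=
  if list_eq_dec Z.eq_dec x y then true else false.

(* Main.v *)
Require Import Defs.
From Stdlib Require Import Reals List ZArith Lia Lra Arith Bool.
From Stdlib Require Import FunctionalExtensionality.
Import ListNotations.
Open Scope R_scope.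

Section SecA.
Local Open Scope R_scope.

Definition trip : Type := (list nat * list nat * list nat)%type.
Definition fstT (tr : trip) : list nat := let '(a,_,_) := tr in a.
Definition cenT (tr : trip) : list nat := let '(_,b,_) := tr in b.
Definition thdT (tr : trip) : list nat := let '(_,_,c) := tr in c.

Fixpoint SW (T : tree) (p : list nat) {struct T} : list trip :=
  match T with Node ts =>
    (fix goW (cs : list tree) (i : nat) {struct cs} : list trip :=
      match cs with
      | [] => []
      | c :: cs' =>
        (match c with Node ws =>
          (fix goB (ws : list tree) (j : nat) (prev : list nat) {struct ws} : list trip :=
            match ws with
            | [] => [(prev, p ++ [i], p)]
            | w :: ws' => (prev, p ++ [i], (p ++ [i]) ++ [j]) :: SW w ((p ++ [i]) ++ [j]) ++ goB ws' (S j) ((p ++ [i]) ++ [j])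
            end) ws 0%nat p
        end) ++ goW cs' (S i)
      end) ts 0%nat
  end.

Fixpoint goB (q par : list nat) (ws : list tree) (j : nat) (prev : list nat) : list trip :=
  match ws with
  | [] => [(prev, q, par)]
  | w :: ws' => (prev, q, q ++ [j]) :: SW w (q ++ [j]) ++ goB q par ws' (S j) (q ++ [j])
  end.
Definition SB (c : tree) (q par : list nat) : list trip :=
  match c with Node ws => goB q par ws 0 par end.
Fixpoint goW (p : list nat) (cs : list tree) (i : nat) : list trip :=
  match cs with [] => [] | c :: cs' => SB c (p ++ [i]) p ++ goW p cs' (S i) end.

Lemma goB_fix p i ws j prev :
  (fix goB (ws : list tree) (j : nat) (prev : list nat) {struct ws} : list trip :=
            match ws with
            | [] => [(prev, p ++ [i], p)]
            | w :: ws' => (prev, p ++ [i], (p ++ [i]) ++ [j]) :: SW w ((p ++ [i]) ++ [j]) ++ goB ws' (S j) ((p ++ [i]) ++ [j])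
            end) ws j prev = goB (p ++ [i]) p ws j prev.
Proof.
  revert j prev. induction ws as [|w ws IHw]; intros j prev; [reflexivity|].
  simpl. f_equal. f_equal. apply IHw.
Qed.

Lemma goW_fix p ts i :
    (fix goW (cs : list tree) (i : nat) {struct cs} : list trip :=
      match cs with
      | [] => []
      | c :: cs' =>
        (match c with Node ws =>
          (fix goB (ws : list tree) (j : nat) (prev : list nat) {struct ws} : list trip :=
            match ws with
            | [] => [(prev, p ++ [i], p)]
            | w :: ws' => (prev, p ++ [i], (p ++ [i]) ++ [j]) :: SW w ((p ++ [i]) ++ [j]) ++ goB ws' (S j) ((p ++ [i]) ++ [j])
            end) ws 0%nat p
        end) ++ goW cs' (S i)
      end) ts i = goW p ts i.
Proof.
  revert i. induction ts as [|c cs IH]; intro i; [reflexivity|].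
  simpl. rewrite IH. f_equal. destruct c as [ws]. apply goB_fix.
Qed.

Lemma SW_eq ts p : SW (Node ts) p = goW p ts 0.
Proof. exact (goW_fix p ts 0). Qed.

Fixpoint tree_ind' (P : tree -> Prop) (H : forall ts, Forall P ts -> P (Node ts)) (t : tree) : P t :=
  match t with Node ts => H ts ((fix f (l : list tree) : Forall P l :=
     match l with [] => Forall_nil P | c :: cs => Forall_cons c (tree_ind' P H c) (f cs) end) ts) end.

Fixpoint goC (p : list nat) (cs : list tree) (i : nat) : list (list nat) :=
  match cs with [] => [] | c :: cs' => contour c (p ++ [i]) ++ [p] ++ goC p cs' (S i) end.

Lemma contour_eq ts p : contour (Node ts) p = p :: goC p ts 0.
Proof.
  simpl. f_equal. generalize 0%nat. induction ts as [|c cs IH]; intro i; [reflexivity|].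
  simpl. f_equal. f_equal. apply IH.
Qed.

Definition flatT (L : list trip) : list (list nat) := flat_map (fun tr => [cenT tr; thdT tr]) L.

Lemma contour_SW : forall T, (forall p, contour T p = p :: flatT (SW T p)) /\
  (forall q par, contour T q ++ [par] = flatT (SB T q par)).
Proof.
  apply tree_ind'. intros ts H. split.
  - intro p. rewrite contour_eq, SW_eq. f_equal. generalize 0%nat.
    induction H as [|c cs [_ Hc] _ IH]; intro k; [reflexivity|].
    simpl. unfold flatT in *. rewrite flat_map_app. rewrite <- Hc, <- IH.
    now rewrite <- app_assoc.
  - intros q par. rewrite contour_eq. simpl SB.
    enough (forall k prev, flatT (goB q par ts k prev) = q :: goC q ts k ++ [par]) by auto.
    induction H as [|c cs [Hc _] _ IH]; intros k prev; [reflexivity|].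
    simpl. unfold flatT in *. rewrite flat_map_app. rewrite Hc. simpl. rewrite IH.
    f_equal. rewrite <- !app_assoc. reflexivity.
Qed.

End SecA.

Section SecB.
Local Open Scope nat_scope.

Fixpoint goB0 (q : list nat) (ws : list tree) (j : nat) (prev : list nat) : list trip :=
  match ws with [] => [] | w :: ws' => (prev, q, q ++ [j]) :: SW w (q ++ [j]) ++ goB0 q ws' (S j) (q ++ [j]) end.
Fixpoint lp (q : list nat) (ws : list tree) (j : nat) (prev : list nat) : list nat :=
  match ws with [] => prev | _ :: ws' => lp q ws' (S j) (q ++ [j]) end.
Lemma goB_split q par ws j prev : goB q par ws j prev = goB0 q ws j prev ++ [(lp q ws j prev, q, par)].
Proof. revert j prev; induction ws; intros; simpl; [reflexivity|]. rewrite IHws. now rewrite app_assoc. Qed.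

Fixpoint chainP (s : list nat) (L : list trip) : Prop :=
  match L with [] => True | tr :: r => fstT tr = s /\ chainP (thdT tr) r end.
Fixpoint endp (s : list nat) (L : list trip) : list nat :=
  match L with [] => s | tr :: r => endp (thdT tr) r end.
Lemma chain_app s L1 L2 : chainP s (L1 ++ L2) <-> chainP s L1 /\ chainP (endp s L1) L2.
Proof. revert s; induction L1; intros; simpl; [tauto|]. rewrite IHL1. tauto. Qed.
Lemma endp_app s L1 L2 : endp s (L1 ++ L2) = endp (endp s L1) L2.
Proof. revert s; induction L1; intros; simpl; auto. Qed.

Lemma chain_tree : forall T, (forall p, chainP p (SW T p) /\ endp p (SW T p) = p) /\
  (forall q par, chainP par (SB T q par) /\ endp par (SB T q par) = par).
Proof.
  apply tree_ind'. intros ts H. split.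
  - intro p. rewrite SW_eq. generalize 0%nat.
    induction H as [|c cs [_ Hc] _ IH]; intro k; simpl; [tauto|].
    rewrite chain_app, endp_app. destruct (Hc (p ++ [k]) p) as [H1 H2]. rewrite H2.
    destruct (IH (S k)). tauto.
  - intros q par. simpl SB.
    enough (forall k prev, chainP prev (goB q par ts k prev) /\ endp prev (goB q par ts k prev) = par) by auto.
    induction H as [|c cs [Hc _] _ IH]; intros k prev; simpl; [tauto|].
    rewrite chain_app, endp_app. destruct (Hc (q ++ [k])) as [H1 H2]. rewrite H2.
    destruct (IH (S k) (q ++ [k])). tauto.
Qed.

Lemma len_tree : forall T, (forall p, length (SW T p) = edges T) /\
  (forall q par, length (SB T q par) = S (edges T)).
Proof.
  apply tree_ind'. intros ts H. split.
  - intro p. rewrite SW_eq. simpl edges. generalize 0%nat.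
    induction H as [|c cs [_ Hc] _ IH]; intro k; simpl; [reflexivity|].
    rewrite length_app, Hc, IH. reflexivity.
  - intros q par. simpl SB. simpl edges.
    enough (forall k prev, length (goB q par ts k prev) = S (list_sum (map (fun c => S (edges c)) ts))) by auto.
    induction H as [|c cs [Hc _] _ IH]; intros k prev; simpl; [reflexivity|].
    rewrite length_app, Hc, IH. lia.
Qed.

Definition pre (q : list nat) (k : nat) (v : list nat) : Prop :=
  exists j r, (k <= j)%nat /\ v = q ++ [j] ++ r.

Lemma cen_tree : forall T, (forall p tr, In tr (SW T p) -> exists r, r <> [] /\ cenT tr = p ++ r) /\
  (forall q par tr, In tr (SB T q par) -> exists r, cenT tr = q ++ r).
Proof.
  apply tree_ind'. intros ts H. split.
  - intro p. rewrite SW_eq. generalize 0%nat.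
    induction H as [|c cs [_ Hc] _ IH]; intros k tr Hin; simpl in Hin; [contradiction|].
    apply in_app_iff in Hin as [Hin|Hin].
    + destruct (Hc _ _ _ Hin) as [r Hr]. exists ([k] ++ r). split; [discriminate|].
      rewrite Hr. now rewrite app_assoc.
    + eauto.
  - intros q par. simpl SB.
    enough (forall k prev tr, In tr (goB q par ts k prev) -> exists r, cenT tr = q ++ r) by eauto.
    induction H as [|c cs [Hc _] _ IH]; intros k prev tr Hin; simpl in Hin.
    + destruct Hin as [<-|[]]. exists []. simpl. now rewrite app_nil_r.
    + destruct Hin as [<-|Hin]. { exists []. simpl. now rewrite app_nil_r. }
      apply in_app_iff in Hin as [Hin|Hin].
      * destruct (Hc _ _ Hin) as [r [_ Hr]]. exists ([k] ++ r). rewrite Hr. now rewrite app_assoc.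
      * eauto.
Qed.

Lemma cen_goW p ts k tr : In tr (goW p ts k) -> exists i r, (k <= i)%nat /\ cenT tr = p ++ [i] ++ r.
Proof.
  revert k. induction ts as [|c cs IH]; intros k Hin; simpl in Hin; [contradiction|].
  apply in_app_iff in Hin as [Hin|Hin].
  - destruct (proj2 (cen_tree c) _ _ _ Hin) as [r Hr]. exists k, r. split; [lia|].
    rewrite Hr. now rewrite app_assoc.
  - destruct (IH _ Hin) as [i [r [H1 H2]]]. exists i, r. split; [lia|auto].
Qed.

Lemma cen_goB0 q ws k prev tr : In tr (goB0 q ws k prev) ->
  cenT tr = q \/ exists j r, (k <= j)%nat /\ r <> [] /\ cenT tr = q ++ [j] ++ r.
Proof.
  revert k prev. induction ws as [|c cs IH]; intros k prev Hin; simpl in Hin; [contradiction|].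
  destruct Hin as [<-|Hin]; [now left|].
  apply in_app_iff in Hin as [Hin|Hin].
  - destruct (proj1 (cen_tree c) _ _ Hin) as [r [Hr1 Hr]]. right. exists k, r.
    split; [lia|]. split; auto. rewrite Hr. now rewrite app_assoc.
  - destruct (IH _ _ Hin) as [H|[j [r [H1 H2]]]]; [now left|]. right. exists j, r. split; [lia|auto].
Qed.

Lemma vtx_tree : forall T,
  (forall p tr, In tr (SW T p) -> (exists r, fstT tr = p ++ r) /\ (exists r, thdT tr = p ++ r)) /\
  (forall q par tr, In tr (SB T q par) ->
     (fstT tr = par \/ exists r, fstT tr = q ++ r) /\ (thdT tr = par \/ exists r, thdT tr = q ++ r)).
Proof.
  apply tree_ind'. intros ts H. split.
  - intro p. rewrite SW_eq. generalize 0%nat.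
    induction H as [|c cs [_ Hc] _ IH]; intros k tr Hin; simpl in Hin; [contradiction|].
    apply in_app_iff in Hin as [Hin|Hin]; [|eauto].
    destruct (Hc _ _ _ Hin) as [[H1|[r1 H1]] [H2|[r2 H2]]];
      (split; [try (exists []; rewrite H1; now rewrite app_nil_r);
               exists ([k] ++ r1); rewrite H1; now rewrite app_assoc|
               try (exists []; rewrite H2; now rewrite app_nil_r);
               exists ([k] ++ r2); rewrite H2; now rewrite app_assoc]).
  - intros q par. simpl SB.
    assert (Hp : par = par \/ exists r, par = q ++ r) by now left.
    revert Hp.
    enough (forall k prev, (prev = par \/ exists r, prev = q ++ r) -> forall tr, In tr (goB q par ts k prev) ->
     (fstT tr = par \/ exists r, fstT tr = q ++ r) /\ (thdT tr = par \/ exists r, thdT tr = q ++ r)) by eauto.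
    induction H as [|c cs [Hc _] _ IH]; intros k prev Hprev tr Hin; simpl in Hin.
    + destruct Hin as [<-|[]]. simpl. auto.
    + destruct Hin as [<-|Hin]. { simpl. split; auto. right. exists [k]. reflexivity. }
      apply in_app_iff in Hin as [Hin|Hin].
      * destruct (Hc _ _ Hin) as [[r1 H1] [r2 H2]].
        split; right; [exists ([k] ++ r1); rewrite H1|exists ([k] ++ r2); rewrite H2]; now rewrite app_assoc.
      * apply (IH (S k) (q ++ [k])); auto. right. exists [k]. reflexivity.
Qed.

Lemma vtx_goW p ts k tr : In tr (goW p ts k) ->
  (fstT tr = p \/ pre p k (fstT tr)) /\ (thdT tr = p \/ pre p k (thdT tr)).
Proof.
  revert k. induction ts as [|c cs IH]; intros k Hin; simpl in Hin; [contradiction|].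
  apply in_app_iff in Hin as [Hin|Hin].
  - destruct (proj2 (vtx_tree c) _ _ _ Hin) as [[H1|[r1 H1]] [H2|[r2 H2]]];
    split; (try now left); right;
      first [exists k, r1; rewrite H1; (split; [lia| now rewrite app_assoc])
            |exists k, r2; rewrite H2; (split; [lia| now rewrite app_assoc])].
  - destruct (IH _ Hin) as [[H1|[j1 [r1 [Hj1 H1]]]] [H2|[j2 [r2 [Hj2 H2]]]]];
    split; (try now left); right;
      first [exists j1, r1; split; [lia|assumption] | exists j2, r2; split; [lia|assumption]].
Qed.

Lemma vtx_goB0 q ws k prev tr : In tr (goB0 q ws k prev) ->
  (fstT tr = prev \/ pre q k (fstT tr)) /\ (thdT tr = prev \/ pre q k (thdT tr)).
Proof.
  revert k prev. induction ws as [|c cs IH]; intros k prev Hin; simpl in Hin; [contradiction|].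
  destruct Hin as [<-|Hin].
  { simpl. split; [now left|]. right. exists k, []. split; [lia|reflexivity]. }
  apply in_app_iff in Hin as [Hin|Hin].
  - destruct (proj1 (vtx_tree c) _ _ Hin) as [[r1 H1] [r2 H2]].
    split; right; [exists k, r1; rewrite H1|exists k, r2; rewrite H2]; (split; [lia| now rewrite app_assoc]).
  - destruct (IH _ _ Hin) as [[H1|[j1 [r1 [Hj1 H1]]]] [H2|[j2 [r2 [Hj2 H2]]]]];
    split; right;
      first [ exists k, []; split; [lia|]; assumption
            | exists j1, r1; split; [lia|assumption]
            | exists j2, r2; split; [lia|assumption] ].
Qed.

End SecB.

Section SecC.
Local Open Scope nat_scope.
Local Open Scope Z_scope.

Definition vdec := list_eq_dec Nat.eq_dec.

Fixpoint bsum (L : list trip) (y : list Z) (v : list nat) : Z :=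
  match L, y with
  | tr :: L', z :: y' => (if list_eq_dec Nat.eq_dec (cenT tr) v then z else 0) + bsum L' y' v
  | _, _ => 0 end.

Definition D (l : list nat -> Z) (v : list nat) (L : list trip) : Z :=
  fold_right Z.add 0 (map (fun tr => if list_eq_dec Nat.eq_dec (cenT tr) v then l (thdT tr) - l (fstT tr) else 0) L).

Definition fits (l : list nat -> Z) (L : list trip) (y : list Z) : Prop :=
  Forall2 (fun tr z => l (thdT tr) - l (fstT tr) = z) L y.

Lemma D_app l v L1 L2 : D l v (L1 ++ L2) = D l v L1 + D l v L2.
Proof. unfold D. rewrite map_app, fold_right_app. induction L1; simpl; [reflexivity|]. rewrite IHL1. lia. Qed.

Lemma D_cons l v tr L : D l v (tr :: L) =
  (if list_eq_dec Nat.eq_dec (cenT tr) v then l (thdT tr) - l (fstT tr) else 0) + D l v L.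
Proof. reflexivity. Qed.

Lemma bsum_app L1 L2 y1 y2 v : length y1 = length L1 ->
  bsum (L1 ++ L2) (y1 ++ y2) v = bsum L1 y1 v + bsum L2 y2 v.
Proof.
  revert y1; induction L1 as [|tr L1 IH]; intros [|z y1] Hl; simpl in *; try lia.
  rewrite IH by lia. lia.
Qed.

Lemma bsum_nocen L y v : (forall tr, In tr L -> cenT tr <> v) -> bsum L y v = 0.
Proof.
  revert y; induction L as [|tr L IH]; intros [|z y] H; simpl; auto.
  destruct (list_eq_dec Nat.eq_dec (cenT tr) v) as [e|_]. { exfalso. apply (H tr); auto. left; auto. }
  rewrite IH; auto. intros; apply H; right; auto.
Qed.

Lemma fits_D l L y v : fits l L y -> D l v L = bsum L y v.
Proof.
  induction 1 as [|tr z L y Hz _ IH]; [reflexivity|].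
  rewrite D_cons. simpl. rewrite IH. destruct (list_eq_dec Nat.eq_dec (cenT tr) v); lia.
Qed.

Lemma fits_app l L1 L2 y1 y2 : fits l L1 y1 -> fits l L2 y2 -> fits l (L1 ++ L2) (y1 ++ y2).
Proof. apply Forall2_app. Qed.

Lemma fits_cons l tr L z y : l (thdT tr) - l (fstT tr) = z -> fits l L y -> fits l (tr :: L) (z :: y).
Proof. intros; constructor; auto. Qed.

Lemma fits_ext l l' L y k : fits l L y ->
  (forall tr, In tr L -> l' (fstT tr) = l (fstT tr) + k /\ l' (thdT tr) = l (thdT tr) + k) -> fits l' L y.
Proof.
  induction 1 as [|tr z L y Hz _ IH]; intros H; constructor.
  - destruct (H tr) as [H1 H2]; [left; auto|]. lia.
  - apply IH. intros; apply H; right; auto.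
Qed.

Lemma split_len {A : Type} (y : list A) n1 n2 : length y = (n1 + n2)%nat ->
  exists y1 y2, y = y1 ++ y2 /\ length y1 = n1 /\ length y2 = n2.
Proof.
  intros H. exists (firstn n1 y), (skipn n1 y). rewrite firstn_skipn. split; auto.
  rewrite length_firstn, length_skipn. split; lia.
Qed.

Definition prefixb (q v : list nat) : bool :=
  if list_eq_dec Nat.eq_dec (firstn (length q) v) q then true else false.

Lemma prefixb_app q r : prefixb q (q ++ r) = true.
Proof.
  unfold prefixb. rewrite firstn_app, Nat.sub_diag, firstn_all. simpl. rewrite app_nil_r.
  destruct (list_eq_dec Nat.eq_dec q q); congruence.
Qed.

Lemma prefixb_refl q : prefixb q q = true.
Proof. rewrite <- (app_nil_r q) at 2. apply prefixb_app. Qed.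

Lemma prefixb_true q v : prefixb q v = true -> exists r, v = q ++ r.
Proof.
  unfold prefixb. destruct (list_eq_dec Nat.eq_dec (firstn (length q) v) q) as [e|]; [|discriminate].
  intros _. exists (skipn (length q) v). rewrite <- e at 1. now rewrite firstn_skipn.
Qed.

Lemma app_idx (q : list nat) k j (r1 r2 : list nat) : (q ++ [k]) ++ r1 = q ++ [j] ++ r2 -> k = j.
Proof. rewrite <- app_assoc. intro H. apply app_inv_head in H. simpl in H. congruence. Qed.

Lemma prefixb_false_idx (q : list nat) k j (r : list nat) : k <> j -> prefixb (q ++ [k]) (q ++ [j] ++ r) = false.
Proof.
  intros Hkj. destruct (prefixb (q ++ [k]) (q ++ [j] ++ r)) eqn:E; auto.
  apply prefixb_true in E as [r' E]. symmetry in E. apply app_idx in E. congruence.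
Qed.

Lemma prefixb_false_short q k v : (length v <= length q)%nat -> prefixb (q ++ [k]) v = false.
Proof.
  intros Hl. destruct (prefixb (q ++ [k]) v) eqn:E; auto.
  apply prefixb_true in E as [r' E]. subst. rewrite !length_app in Hl. simpl in Hl. lia.
Qed.

Lemma D_tree : forall T, (forall l v p, D l v (SW T p) = 0) /\ (forall l v q par, D l v (SB T q par) = 0).
Proof.
  apply tree_ind'. intros ts H. split.
  - intros l v p. rewrite SW_eq. generalize 0%nat.
    induction H as [|c cs [_ Hc] _ IH]; intro k; simpl; [reflexivity|].
    rewrite D_app, Hc, IH. reflexivity.
  - intros l v q par. simpl SB.
    enough (forall k prev, D l v (goB q par ts k prev) =
      if list_eq_dec Nat.eq_dec q v then l par - l prev else 0) as E.
    { rewrite E. destruct (list_eq_dec Nat.eq_dec q v); lia. }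
    induction H as [|c cs [Hc _] _ IH]; intros k prev; simpl goB.
    + rewrite D_cons. simpl. unfold D; simpl. lia.
    + rewrite D_cons, D_app, Hc, IH. simpl. destruct (list_eq_dec Nat.eq_dec q v); lia.
Qed.

Lemma D_goB0 l v q ws k prev : D l v (goB0 q ws k prev) =
  if list_eq_dec Nat.eq_dec q v then l (lp q ws k prev) - l prev else 0.
Proof.
  revert k prev. induction ws as [|c cs IH]; intros k prev; simpl goB0; simpl lp.
  - unfold D; simpl. destruct (list_eq_dec Nat.eq_dec q v); lia.
  - rewrite D_cons, D_app, (proj1 (D_tree c)), IH. simpl. destruct (list_eq_dec Nat.eq_dec q v); lia.
Qed.

Lemma both_zero (a b : list nat -> Z) : (forall v, a v + b v = 0) -> (forall v, a v = 0 \/ b v = 0) ->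
  (forall v, a v = 0) /\ (forall v, b v = 0).
Proof. intros H1 H2. split; intro v; specialize (H1 v); destruct (H2 v); lia. Qed.

Lemma back_tree : forall T,
 (forall p y, length y = length (SW T p) -> (forall v, bsum (SW T p) y v = 0) -> exists l, fits l (SW T p) y) /\
 (forall q par y, (forall j r, par <> q ++ [j] ++ r) -> length y = length (SB T q par) ->
    (forall v, bsum (SB T q par) y v = 0) -> exists l, fits l (SB T q par) y).
Proof.
  apply tree_ind'. intros ts H. split.
  - intro p. rewrite SW_eq. generalize 0%nat.
    induction H as [|c cs [_ Hc] _ IH]; intros k y Hl Hb; simpl goW in *.
    + exists (fun _ => 0). destruct y; [constructor|discriminate].
    + rewrite length_app in Hl. destruct (split_len _ _ _ Hl) as [y1 [y2 [-> [Hl1 Hl2]]]].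
      assert (Hb' := fun v => eq_trans (eq_sym (bsum_app _ _ _ _ v Hl1)) (Hb v)).
      destruct (both_zero _ _ Hb') as [Hb1 Hb2].
      { intro v. destruct (prefixb (p ++ [k]) v) eqn:E.
        - right. apply prefixb_true in E as [r ->]. apply bsum_nocen. intros tr Htr Heq.
          destruct (cen_goW _ _ _ _ Htr) as [i [r' [Hi Hc']]]. rewrite Hc' in Heq.
          symmetry in Heq. apply app_idx in Heq. lia.
        - left. apply bsum_nocen. intros tr Htr Heq.
          destruct (proj2 (cen_tree c) _ _ _ Htr) as [r Hr]. rewrite Hr in Heq. subst v.
          rewrite prefixb_app in E. discriminate. }
      destruct (Hc (p ++ [k]) p y1) as [l1 Hf1]; auto.
      { intros j r Heq. apply (f_equal (@length nat)) in Heq. rewrite !length_app in Heq. simpl in Heq. lia. }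
      destruct (IH (S k) y2) as [l2 Hf2]; auto.
      exists (fun v => if prefixb (p ++ [k]) v then l1 v - l1 p + l2 p else l2 v).
      apply fits_app.
      * apply (fits_ext l1 _ _ _ (l2 p - l1 p) Hf1). intros tr Htr.
        destruct (proj2 (vtx_tree c) _ _ _ Htr) as [[H1|[r1 H1]] [H2|[r2 H2]]];
        rewrite ?H1, ?H2, ?prefixb_app, ?(prefixb_false_short p k p) by lia; split; lia.
      * apply (fits_ext l2 _ _ _ 0 Hf2). intros tr Htr.
        destruct (vtx_goW _ _ _ _ Htr) as [[H1|[j1 [r1 [Hj1 H1]]]] [H2|[j2 [r2 [Hj2 H2]]]]];
        rewrite ?H1, ?H2, ?(prefixb_false_short p k p), ?prefixb_false_idx by lia; split; lia.
  - intros q par y Hpar. simpl SB. rewrite goB_split.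
    assert (Hin : forall k prev y, (forall j r, (k <= j)%nat -> prev <> q ++ [j] ++ r) ->
       length y = length (goB0 q ts k prev) ->
       (forall v, v <> q -> bsum (goB0 q ts k prev) y v = 0) -> exists l, fits l (goB0 q ts k prev) y).
    { clear y Hpar.
      induction H as [|c cs [Hc _] _ IH]; intros k prev y Hprev Hl Hb; simpl goB0 in *.
      + exists (fun _ => 0). destruct y; [constructor|discriminate].
      + destruct y as [|z y]; [discriminate|]. simpl in Hl. rewrite length_app in Hl.
        injection Hl as Hl.
        destruct (split_len _ _ _ Hl) as [y1 [y2 [-> [Hl1 Hl2]]]].
        assert (Hb' : forall v, v <> q -> bsum (SW c (q ++ [k])) y1 v + bsum (goB0 q cs (S k) (q ++ [k])) y2 v = 0).
        { intros v Hv. specialize (Hb v Hv). simpl in Hb. rewrite bsum_app in Hb by auto.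
          destruct (list_eq_dec Nat.eq_dec q v); [congruence|]. lia. }
        assert (Hor : forall v, v <> q -> bsum (SW c (q ++ [k])) y1 v = 0 \/ bsum (goB0 q cs (S k) (q ++ [k])) y2 v = 0).
        { intros v Hv. destruct (prefixb (q ++ [k]) v) eqn:E.
          - right. apply prefixb_true in E as [r ->]. apply bsum_nocen. intros tr Htr Heq.
            destruct (cen_goB0 _ _ _ _ _ Htr) as [Hq|[j [r' [Hj [_ Hc']]]]].
            + rewrite Hq in Heq. apply (f_equal (@length nat)) in Heq. rewrite !length_app in Heq. simpl in Heq. lia.
            + rewrite Hc' in Heq. symmetry in Heq. apply app_idx in Heq. lia.
          - left. apply bsum_nocen. intros tr Htr Heq.
            destruct (proj1 (cen_tree c) _ _ Htr) as [r [_ Hr]]. rewrite Hr in Heq. subst v.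
            rewrite prefixb_app in E. discriminate. }
        assert (Hb1 : forall v, bsum (SW c (q ++ [k])) y1 v = 0).
        { intro v. destruct (vdec v q) as [->|Hv].
          - apply bsum_nocen. intros tr Htr Heq. destruct (proj1 (cen_tree c) _ _ Htr) as [r [Hr Hr']].
            rewrite Hr' in Heq. apply (f_equal (@length nat)) in Heq. rewrite !length_app in Heq.
            simpl in Heq. lia.
          - specialize (Hb' v Hv). destruct (Hor v Hv); lia. }
        assert (Hb2 : forall v, v <> q -> bsum (goB0 q cs (S k) (q ++ [k])) y2 v = 0).
        { intros v Hv. specialize (Hb' v Hv). destruct (Hor v Hv); lia. }
        destruct (Hc (q ++ [k]) y1) as [l1 Hf1]; auto.
        destruct (IH (S k) (q ++ [k]) y2) as [l2 Hf2]; auto.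
        { intros j r Hj Heq. rewrite <- (app_nil_r (q ++ [k])) in Heq. apply app_idx in Heq. lia. }
        exists (fun v => if prefixb (q ++ [k]) v then l1 v - l1 (q ++ [k]) + l2 (q ++ [k])
                    else if vdec v prev then l2 (q ++ [k]) - z else l2 v).
        assert (Hpf : prefixb (q ++ [k]) prev = false).
        { destruct (prefixb (q ++ [k]) prev) eqn:E; auto. apply prefixb_true in E as [r E].
          rewrite <- app_assoc in E. exfalso. apply (Hprev k r); auto. }
        apply fits_cons.
        * simpl. rewrite prefixb_refl, Hpf. destruct (vdec prev prev); [lia|congruence].
        * apply fits_app.
          -- apply (fits_ext l1 _ _ _ (l2 (q ++ [k]) - l1 (q ++ [k])) Hf1). intros tr Htr.
             destruct (proj1 (vtx_tree c) _ _ Htr) as [[r1 H1] [r2 H2]].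
             rewrite H1, H2, !prefixb_app. split; lia.
          -- apply (fits_ext l2 _ _ _ 0 Hf2). intros tr Htr.
             assert (Hgen : forall v, (v = q ++ [k] \/ pre q (S k) v) ->
                (if prefixb (q ++ [k]) v then l1 v - l1 (q ++ [k]) + l2 (q ++ [k])
                    else if vdec v prev then l2 (q ++ [k]) - z else l2 v) = l2 v + 0).
             { intros v [->|[j [r [Hj ->]]]].
               - rewrite prefixb_refl. lia.
               - rewrite prefixb_false_idx by lia. destruct (vdec (q ++ [j] ++ r) prev) as [e|].
                 + exfalso. apply (Hprev j r); [lia|auto].
                 + lia. }
             destruct (vtx_goB0 _ _ _ _ _ Htr) as [Ha Hc']. split; apply Hgen; auto. }
    intros Hl Hb. rewrite length_app in Hl. simpl in Hl.
    destruct (split_len y _ 1 Hl) as [y0 [yl [-> [Hl0 Hll]]]].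
    destruct yl as [|z [|]]; try discriminate.
    assert (Hbq := Hb q). rewrite bsum_app in Hbq by auto. simpl in Hbq.
    destruct (Hin 0%nat par y0) as [l Hf]; auto.
    { intros v Hv. specialize (Hb v). rewrite bsum_app in Hb by auto. simpl in Hb.
      destruct (list_eq_dec Nat.eq_dec q v); [congruence|]. lia. }
    exists l. apply fits_app; auto. apply fits_cons; [|constructor]. simpl.
    assert (E := fits_D _ _ _ q Hf). rewrite D_goB0 in E.
    destruct (list_eq_dec Nat.eq_dec q q); [|congruence]. lia.
Qed.

End SecC.

Section SecD.
Local Open Scope nat_scope.

Definition wnb (u : list nat) (ts : list tree) (j : nat) : list nat :=
  if orb (j =? 0)%nat (j =? S (length ts))%nat then removelast u else u ++ [(j - 1)%nat].

Definition good (t : tree) (tr : trip) : Prop := exists ts j,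
  Nat.odd (length (cenT tr)) = true /\ sub t (cenT tr) = Some (Node ts) /\ (j < S (length ts))%nat /\
  fstT tr = wnb (cenT tr) ts j /\ thdT tr = wnb (cenT tr) ts (S j).

Lemma sub_app t p r : sub t (p ++ r) = match sub t p with Some T => sub T r | None => None end.
Proof.
  revert t; induction p as [|i p IH]; intro t; [reflexivity|].
  destruct t as [ts]. simpl. destruct (nth_error ts i); auto.
Qed.

Lemma sub_child t q ts k c : sub t q = Some (Node ts) -> nth_error ts k = Some c -> sub t (q ++ [k]) = Some c.
Proof. intros H1 H2. rewrite sub_app, H1. simpl. now rewrite H2. Qed.

Lemma nth_error_pre {A : Type} (pre ws : list A) w : nth_error (pre ++ w :: ws) (length pre) = Some w.
Proof. rewrite nth_error_app2 by lia. now rewrite Nat.sub_diag. Qed.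

Lemma even_S_of_odd n : Nat.odd n = true -> Nat.even (n + 1) = true.
Proof. intros H. rewrite Nat.add_1_r, Nat.even_succ. exact H. Qed.
Lemma odd_S_of_even n : Nat.even n = true -> Nat.odd (n + 1) = true.
Proof. intros H. rewrite Nat.add_1_r, Nat.odd_succ. exact H. Qed.

Lemma wnb_mid q ws k : (k < length ws)%nat -> wnb q ws (S k) = q ++ [k].
Proof.
  intros H. unfold wnb. replace (S k =? 0)%nat with false by reflexivity.
  replace (S k =? S (length ws))%nat with false by (symmetry; apply Nat.eqb_neq; lia).
  simpl. now rewrite Nat.sub_0_r.
Qed.

Lemma wnb_last q ws : wnb q ws (S (length ws)) = removelast q.
Proof. unfold wnb. now rewrite Nat.eqb_refl, orb_true_r. Qed.

Lemma wnb_first q ws : wnb q ws 0 = removelast q.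
Proof. reflexivity. Qed.

Lemma good_tree t : forall T,
  (forall p, sub t p = Some T -> Nat.even (length p) = true -> forall tr, In tr (SW T p) -> good t tr) /\
  (forall q par, sub t q = Some T -> Nat.odd (length q) = true -> removelast q = par ->
     forall tr, In tr (SB T q par) -> good t tr).
Proof.
  apply tree_ind'. intros ts H. split.
  - intros p Hs He. rewrite SW_eq.
    enough (forall pre cs, ts = pre ++ cs -> forall tr, In tr (goW p cs (length pre)) -> good t tr)
      by (apply (H0 [] ts); reflexivity).
    intros pre cs Heq. revert pre Heq. induction cs as [|c cs IH]; intros pre Heq tr Hin; [contradiction|].
    simpl in Hin. apply in_app_iff in Hin as [Hin|Hin].
    + assert (Hc : In c ts) by (rewrite Heq; apply in_or_app; right; left; auto).
      destruct (proj1 (Forall_forall _ _) H c Hc) as [_ HB].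
      apply (HB (p ++ [length pre]) p); auto.
      * apply (sub_child _ _ ts); auto. rewrite Heq. apply nth_error_pre.
      * rewrite length_app. simpl. apply odd_S_of_even; auto.
      * apply removelast_last.
    + apply (IH (pre ++ [c])); [rewrite Heq, <- app_assoc; reflexivity|].
      rewrite length_app. simpl. now rewrite Nat.add_1_r.
  - intros q par Hs Ho Hr. simpl SB.
    enough (forall pre ws prev, ts = pre ++ ws -> prev = wnb q ts (length pre) ->
       forall tr, In tr (goB q par ws (length pre) prev) -> good t tr)
      by (apply (H0 [] ts); auto; simpl; rewrite wnb_first; auto).
    intros pre ws. revert pre. induction ws as [|c cs IH]; intros pre prev Heq Hprev tr Hin; simpl in Hin.
    + destruct Hin as [<-|[]]. exists ts, (length pre). simpl. rewrite Heq, app_nil_r in *.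
      repeat split; auto. rewrite wnb_last. auto.
    + destruct Hin as [<-|Hin].
      { exists ts, (length pre). simpl. assert (length pre < length ts)%nat by (rewrite Heq, length_app; simpl; lia).
        repeat split; auto; try lia; rewrite wnb_mid; auto. }
      apply in_app_iff in Hin as [Hin|Hin].
      * assert (Hc : In c ts) by (rewrite Heq; apply in_or_app; right; left; auto).
        destruct (proj1 (Forall_forall _ _) H c Hc) as [HW _].
        apply (HW (q ++ [length pre])); auto.
        -- apply (sub_child _ _ ts); auto. rewrite Heq. apply nth_error_pre.
        -- rewrite length_app. simpl. apply even_S_of_odd; auto.
      * apply (IH (pre ++ [c]) (q ++ [length pre])).
        -- rewrite Heq, <- app_assoc; reflexivity.
        -- rewrite length_app. simpl. rewrite Nat.add_1_r. symmetry. apply wnb_mid.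
           rewrite Heq, length_app. simpl. lia.
        -- rewrite length_app. simpl. now rewrite Nat.add_1_r.
Qed.

Lemma in_goW p c ts k i tr : nth_error ts i = Some c -> In tr (SB c (p ++ [k + i]) p) -> In tr (goW p ts k).
Proof.
  revert k i. induction ts as [|c' ts IH]; intros k i Hn Hin; [destruct i; discriminate|].
  simpl. apply in_or_app. destruct i as [|i].
  - simpl in Hn. injection Hn as ->. left. now rewrite Nat.add_0_r in Hin.
  - right. apply (IH (S k) i); auto. now replace (S k + i)%nat with (k + S i)%nat by lia.
Qed.

Lemma in_goB q par c ws k j prev tr : nth_error ws j = Some c -> In tr (SW c (q ++ [k + j])) ->
  In tr (goB q par ws k prev).
Proof.
  revert k j prev. induction ws as [|c' ws IH]; intros k j prev Hn Hin; [destruct j; discriminate|].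
  simpl. right. apply in_or_app. destruct j as [|j].
  - simpl in Hn. injection Hn as ->. left. now rewrite Nat.add_0_r in Hin.
  - right. apply (IH (S k) j); auto. now replace (S k + j)%nat with (k + S j)%nat by lia.
Qed.

Lemma thd_goB q par c ws k j prev : nth_error ws j = Some c ->
  In (q ++ [k + j]) (map thdT (goB q par ws k prev)).
Proof.
  revert k j prev. induction ws as [|c' ws IH]; intros k j prev Hn; [destruct j; discriminate|].
  simpl. destruct j as [|j].
  - left. now rewrite Nat.add_0_r.
  - right. rewrite map_app. apply in_or_app. right.
    replace (k + S j)%nat with (S k + j)%nat by lia. apply (IH _ _ _ Hn).
Qed.

Lemma goB_q q par ws : removelast q = par -> forall pre k prev, k = length pre ->
  prev = wnb q (pre ++ ws) k -> forall j, (k <= j <= length (pre ++ ws))%nat ->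
  In (wnb q (pre ++ ws) j, q, wnb q (pre ++ ws) (S j)) (goB q par ws k prev).
Proof.
  intros Hr. induction ws as [|w ws IH]; intros pre k prev Hk Hprev j Hj; simpl.
  - left. rewrite app_nil_r in *. assert (j = k) by lia. subst j.
    rewrite Hk, wnb_last. congruence.
  - rewrite length_app in Hj. simpl in Hj.
    destruct (Nat.eq_dec j k) as [->|Hne].
    + left. rewrite wnb_mid by (rewrite length_app; simpl; lia). congruence.
    + right. apply in_or_app. right.
      replace (pre ++ w :: ws) with ((pre ++ [w]) ++ ws) by (rewrite <- app_assoc; reflexivity).
      apply IH.
      * rewrite length_app. simpl. lia.
      * rewrite wnb_mid; auto. rewrite length_app, length_app. simpl. lia.
      * rewrite length_app, length_app. simpl. lia.
Qed.

Lemma compl_tree : forall T,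
  (forall p r ts, Nat.odd (length r) = true -> sub T r = Some (Node ts) -> forall j, (j < S (length ts))%nat ->
     In (wnb (p ++ r) ts j, p ++ r, wnb (p ++ r) ts (S j)) (SW T p)) /\
  (forall q par, removelast q = par -> forall r ts, Nat.even (length r) = true -> sub T r = Some (Node ts) ->
     forall j, (j < S (length ts))%nat ->
     In (wnb (q ++ r) ts j, q ++ r, wnb (q ++ r) ts (S j)) (SB T q par)).
Proof.
  apply tree_ind'. intros ts H. split.
  - intros p [|i r] ts' Ho Hs j Hj; [discriminate|]. simpl in Hs.
    destruct (nth_error ts i) as [c|] eqn:En; [|discriminate].
    assert (Hc : In c ts) by (eapply nth_error_In; eauto).
    destruct (proj1 (Forall_forall _ _) H c Hc) as [_ HB].
    rewrite SW_eq. apply (in_goW p c ts 0 i); auto. simpl.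
    replace (p ++ i :: r) with ((p ++ [i]) ++ r) by (rewrite <- app_assoc; reflexivity).
    apply HB; auto. apply removelast_last.
    simpl in Ho. now rewrite Nat.odd_succ in Ho.
  - intros q par Hr [|j0 r] ts' He Hs j Hj.
    + simpl in Hs. injection Hs as <-. rewrite app_nil_r. simpl SB.
      apply (goB_q q par ts Hr [] 0 par); auto; simpl; try lia.
    + simpl in Hs. destruct (nth_error ts j0) as [c|] eqn:En; [|discriminate].
      assert (Hc : In c ts) by (eapply nth_error_In; eauto).
      destruct (proj1 (Forall_forall _ _) H c Hc) as [HW _].
      simpl SB. apply (in_goB q par c ts 0 j0); auto. simpl.
      replace (q ++ j0 :: r) with ((q ++ [j0]) ++ r) by (rewrite <- app_assoc; reflexivity).
      apply HW; auto. change (Nat.even (S (length r)) = true) in He. rewrite Nat.even_succ in He. auto.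
Qed.

Lemma white_tree : forall T,
  (forall p r, r <> [] -> Nat.even (length r) = true -> sub T r <> None -> In (p ++ r) (map thdT (SW T p))) /\
  (forall q par r, Nat.odd (length r) = true -> sub T r <> None -> In (q ++ r) (map thdT (SB T q par))).
Proof.
  apply tree_ind'. intros ts H. split.
  - intros p [|i r] Hne He Hs; [congruence|]. simpl in Hs.
    destruct (nth_error ts i) as [c|] eqn:En; [|congruence].
    assert (Hc : In c ts) by (eapply nth_error_In; eauto).
    destruct (proj1 (Forall_forall _ _) H c Hc) as [_ HB].
    change (Nat.even (S (length r)) = true) in He. rewrite Nat.even_succ in He.
    destruct (proj1 (in_map_iff _ _ _) (HB (p ++ [i]) p r He Hs)) as [tr [Htr Hin]].
    apply in_map_iff. exists tr. split.
    + rewrite Htr, <- app_assoc. reflexivity.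
    + rewrite SW_eq. apply (in_goW p c ts 0 i); auto.
  - intros q par [|j r] Ho Hs; [discriminate|]. simpl in Hs.
    destruct (nth_error ts j) as [c|] eqn:En; [|congruence].
    simpl SB. destruct r as [|x r'].
    + apply (thd_goB q par c ts 0 j par En).
    + assert (Hc : In c ts) by (eapply nth_error_In; eauto).
      destruct (proj1 (Forall_forall _ _) H c Hc) as [HW _].
      change (Nat.odd (S (length (x :: r'))) = true) in Ho. rewrite Nat.odd_succ in Ho.
      destruct (proj1 (in_map_iff _ _ _) (HW (q ++ [j]) (x :: r') ltac:(discriminate) Ho Hs)) as [tr [Htr Hin]].
      apply in_map_iff. exists tr. split.
      * rewrite Htr, <- app_assoc. reflexivity.
      * apply (in_goB q par c ts 0 j); auto.
Qed.

Lemma wnb_white t u ts j : Nat.odd (length u) = true -> sub t u = Some (Node ts) -> (j <= S (length ts))%nat ->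
  sub t (wnb u ts j) <> None /\ Nat.even (length (wnb u ts j)) = true.
Proof.
  intros Ho Hs Hj. unfold wnb.
  destruct ((j =? 0)%nat || (j =? S (length ts))%nat) eqn:E.
  - destruct u as [|x u'] using rev_ind; [discriminate|]. rewrite removelast_last.
    rewrite sub_app in Hs. split.
    + destruct (sub t u'); congruence.
    + rewrite length_app in Ho. simpl in Ho. rewrite Nat.add_1_r, Nat.odd_succ in Ho. auto.
  - apply orb_false_iff in E as [E1 E2]. apply Nat.eqb_neq in E1, E2. split.
    + rewrite sub_app, Hs. simpl. destruct (nth_error ts (j - 1)) eqn:En; [discriminate|].
      apply nth_error_None in En. lia.
    + rewrite length_app. simpl. apply even_S_of_odd; auto.
Qed.

End SecD.

Section SecE.
Local Open Scope nat_scope.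
Local Open Scope Z_scope.

Definition dtr : trip := ([], [], []).

Lemma nth_flatT (L : list trip) k d : (k < length L)%nat ->
  nth (2 * k) (flatT L) d = cenT (nth k L dtr) /\ nth (2 * k + 1) (flatT L) d = thdT (nth k L dtr).
Proof.
  revert k; induction L as [|tr L IH]; intros k Hk; simpl in Hk; [lia|].
  destruct k as [|k]; [simpl; auto|].
  replace (2 * S k)%nat with (S (S (2 * k))) by lia.
  replace (S (S (2 * k)) + 1)%nat with (S (S (2 * k + 1))) by lia.
  simpl. apply IH. lia.
Qed.

Definition Ew (t : tree) : list (list nat) := [] :: map thdT (SW t []).

Lemma len_SW t : length (SW t []) = edges t.
Proof. apply (proj1 (len_tree t)). Qed.

Lemma map_nth_seq {A : Type} (L : list A) d : map (fun m => nth m L d) (seq 0 (length L)) = L.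
Proof.
  enough (forall pre, map (fun m => nth m (pre ++ L) d) (seq (length pre) (length L)) = L)
    by exact (H []).
  induction L as [|x L IH]; intro pre; [reflexivity|]. simpl.
  rewrite nth_middle. f_equal.
  replace (pre ++ x :: L) with ((pre ++ [x]) ++ L) by (rewrite <- app_assoc; reflexivity).
  replace (S (length pre)) with (length (pre ++ [x])) by (rewrite length_app; simpl; lia).
  apply IH.
Qed.

Lemma cseq_eq t : cseq t = Ew t.
Proof.
  unfold cseq. rewrite <- (map_nth_seq (Ew t) []).
  replace (length (Ew t)) with (S (edges t)) by (unfold Ew; simpl; rewrite length_map, len_SW; auto).
  apply map_ext_in. intros m Hm. apply in_seq in Hm.
  unfold cstep. rewrite (proj1 (contour_SW t)). unfold Ew.
  destruct m as [|m]; [reflexivity|].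
  replace (2 * S m)%nat with (S (2 * m + 1)) by lia.
  assert (Hm' : (m < length (SW t []))%nat) by (rewrite len_SW; lia).
  set (k := (2 * m + 1)%nat). simpl nth. subst k.
  rewrite (proj2 (nth_flatT _ m [] Hm')).
  symmetry. exact (map_nth thdT (SW t []) dtr m).
Qed.

Lemma bsum_seq (L : list trip) y v : length y = length L ->
  fold_right Z.add 0 (map (fun i => if list_eq_dec Nat.eq_dec (cenT (nth (i - 1) L dtr)) v
      then nth (i - 1) y 0 else 0) (seq 1 (length L))) = bsum L y v.
Proof.
  revert y; induction L as [|tr L IH]; intros [|z y] Hl; simpl in Hl; try lia; [reflexivity|].
  simpl length. rewrite <- cons_seq. simpl map. simpl fold_right. simpl bsum. f_equal.
  rewrite <- seq_shift, map_map. rewrite <- (IH y) by lia. f_equal. apply map_ext_in.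
  intros i Hi. apply in_seq in Hi. replace (S i - 1)%nat with (S (i - 1)) by lia. reflexivity.
Qed.

Lemma blocksum_eq t xi v : length xi = edges t -> blocksum t xi v = bsum (SW t []) xi v.
Proof.
  intros Hl. unfold blocksum. rewrite <- bsum_seq by (rewrite len_SW; auto). rewrite len_SW.
  f_equal. apply map_ext_in. intros i Hi. apply in_seq in Hi.
  unfold cstep. rewrite (proj1 (contour_SW t)).
  replace (2 * i - 1)%nat with (S (2 * (i - 1))) by lia.
  assert (Hi' : (i - 1 < length (SW t []))%nat) by (rewrite len_SW; lia).
  set (k := (2 * (i - 1))%nat). simpl nth. subst k.
  rewrite (proj1 (nth_flatT _ (i - 1) [] Hi')). reflexivity.
Qed.

Lemma good_top t tr : In tr (SW t []) -> good t tr.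
Proof. intros H. apply (proj1 (good_tree t t) []); auto. Qed.

Lemma cond_iff t xi : length xi = edges t ->
  (cond_event t xi = true <-> forall v, bsum (SW t []) xi v = 0).
Proof.
  intros Hl. unfold cond_event. rewrite forallb_forall. split.
  - intros H v. destruct (in_dec (list_eq_dec Nat.eq_dec) v (map cenT (SW t []))) as [Hin|Hn].
    + apply in_map_iff in Hin as [tr [<- Htr]].
      destruct (good_top t tr Htr) as [ts [j [Ho _]]].
      assert (Hc : In (cenT tr) (contour t [])).
      { rewrite (proj1 (contour_SW t)). right. unfold flatT. apply in_flat_map. exists tr. split; simpl; auto. }
      specialize (H _ Hc). rewrite Ho in H. apply Z.eqb_eq in H. rewrite <- blocksum_eq; auto.
    + apply bsum_nocen. intros tr Htr Heq. apply Hn. apply in_map_iff. eauto.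
  - intros H v _. destruct (Nat.odd (length v)); auto. apply Z.eqb_eq. rewrite blocksum_eq; auto.
Qed.

Definition sumZ (l : list Z) : Z := fold_right Z.add 0 l.

Lemma fits_walk l L y : fits l L y -> forall s a, chainP s L ->
  psums a y = map (fun v => l v - l s + a) (s :: map thdT L).
Proof.
  induction 1 as [|tr z L y Hz _ IH]; intros s a Hc; [simpl; f_equal; lia|].
  destruct Hc as [Hf Hc]. subst s. simpl. f_equal; [lia|].
  rewrite (IH _ (a + z) Hc). simpl. f_equal; [lia|]. apply map_ext. intro v. lia.
Qed.

Lemma fits_sum l L y : fits l L y -> forall s, chainP s L -> sumZ y = l (endp s L) - l s.
Proof.
  induction 1 as [|tr z L y Hz _ IH]; intros s Hc; [simpl; lia|].
  destruct Hc as [Hf Hc]. subst s. simpl. rewrite (IH _ Hc). lia.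
Qed.

Lemma chain_top t : chainP [] (SW t []) /\ endp [] (SW t []) = [].
Proof. apply (proj1 (chain_tree t)). Qed.

Lemma walk_fits t l y : fits l (SW t []) y -> walk y = map (fun v => l v - l []) (Ew t).
Proof.
  intros H. unfold walk. rewrite (fits_walk _ _ _ H [] 0 (proj1 (chain_top t))).
  unfold Ew. apply map_ext. intro; lia.
Qed.

Lemma consist t y : length y = edges t -> cond_event t y = true -> exists l, fits l (SW t []) y.
Proof.
  intros Hl Hc. apply (proj1 (back_tree t)).
  - rewrite len_SW; auto.
  - apply cond_iff; auto.
Qed.

Fixpoint idx (v : list nat) (L : list (list nat)) : nat :=
  match L with [] => 0 | x :: L' => if list_eq_dec Nat.eq_dec x v then 0 else S (idx v L') end.

Lemma idx_spec v L : In v L -> (idx v L < length L)%nat /\ nth (idx v L) L [] = v.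
Proof.
  induction L as [|x L IH]; intros H; [contradiction|]. simpl.
  destruct (list_eq_dec Nat.eq_dec x v) as [e|ne]; [simpl; split; [lia|auto]|].
  destruct H as [->|H]; [congruence|]. destruct (IH H). simpl. split; [lia|auto].
Qed.

Definition white_b (t : tree) (v : list nat) : bool :=
  (match sub t v with Some _ => true | None => false end && Nat.even (length v))%bool.

Lemma white_b_iff t v : white_b t v = true <-> is_white t v.
Proof.
  unfold white_b, is_white, is_vertex. destruct (sub t v); simpl; split; intuition congruence.
Qed.

Definition Psi (t : tree) (xi : list Z) (v : list nat) : Z :=
  if white_b t v then nth (idx v (Ew t)) (walk xi) 0 else 0.

Lemma Ew_white t v : In v (Ew t) -> white_b t v = true.
Proof.
  intros [<-|H]; [reflexivity|]. apply in_map_iff in H as [tr [<- Htr]].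
  destruct (good_top t tr Htr) as [ts [j [Ho [Hs [Hj [_ Hth]]]]]].
  apply white_b_iff. rewrite Hth. destruct (wnb_white t _ _ (S j) Ho Hs) as [H1 H2]; [lia|]. split; auto.
Qed.

Lemma fst_in_Ew t tr : In tr (SW t []) -> In (fstT tr) (Ew t).
Proof.
  assert (G : forall L s, chainP s L -> forall tr, In tr L -> fstT tr = s \/ In (fstT tr) (map thdT L)).
  { induction L as [|tr' L IH]; intros s Hc tr0 Hin; [contradiction|].
    destruct Hc as [Hf Hc]. destruct Hin as [<-|Hin]; [left; auto|].
    destruct (IH _ Hc _ Hin) as [H|H]; right; simpl; auto. }
  intros Htr. destruct (G _ _ (proj1 (chain_top t)) _ Htr) as [H|H]; [left; auto|right; auto].
Qed.

Lemma Psi_E t xi l : fits l (SW t []) xi -> forall v, In v (Ew t) -> Psi t xi v = l v - l [].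
Proof.
  intros Hf v Hv. unfold Psi. rewrite Ew_white by auto. rewrite (walk_fits _ _ _ Hf).
  destruct (idx_spec _ _ Hv) as [H1 H2].
  assert (E : nth (idx v (Ew t)) (map (fun v => l v - l []) (Ew t)) 0 =
              (fun v => l v - l []) (nth (idx v (Ew t)) (Ew t) [])).
  { rewrite <- (map_nth (fun v => l v - l []) (Ew t) [] (idx v (Ew t))). apply nth_indep. rewrite length_map; auto. }
  rewrite E, H2. reflexivity.
Qed.

Lemma map_Psi t xi : length xi = edges t -> cond_event t xi = true -> map (Psi t xi) (Ew t) = walk xi.
Proof.
  intros Hl Hc. destruct (consist t xi Hl Hc) as [l Hf]. rewrite (walk_fits _ _ _ Hf).
  apply map_ext_in. apply Psi_E; auto.
Qed.

Lemma fits_In l L y tr : fits l L y -> In tr L -> In (l (thdT tr) - l (fstT tr)) y.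
Proof.
  induction 1 as [|tr' z L y Hz _ IH]; intros Hin; [contradiction|].
  destruct Hin as [<-|Hin]; [left; auto|right; auto].
Qed.

Definition allge (xi : list Z) : bool := forallb (fun z => -1 <=? z) xi.

Lemma Psi_adm t xi : length xi = edges t -> allge xi = true -> cond_event t xi = true ->
  admissible t (Psi t xi).
Proof.
  intros Hl Ha Hc. destruct (consist t xi Hl Hc) as [l Hf]. split; [|split].
  - rewrite (Psi_E t xi l Hf [] (or_introl eq_refl)). lia.
  - intros v Hv. unfold Psi. destruct (white_b t v) eqn:E; auto. apply white_b_iff in E. contradiction.
  - intros u ts Ho Hs w j Hj. unfold w.
    change (Psi t xi (wnb u ts (S j)) >= Psi t xi (wnb u ts j) - 1).
    assert (Hin := proj1 (compl_tree t) [] u ts Ho Hs j Hj). simpl in Hin.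
    rewrite (Psi_E t xi l Hf (wnb u ts (S j))) by (right; apply in_map_iff; eexists; split; [|exact Hin]; reflexivity).
    rewrite (Psi_E t xi l Hf (wnb u ts j)) by (apply (fst_in_Ew t _ Hin)).
    assert (Hz := fits_In _ _ _ _ Hf Hin). simpl in Hz.
    unfold allge in Ha. rewrite forallb_forall in Ha. specialize (Ha _ Hz). apply Z.leb_le in Ha. lia.
Qed.

Definition diffs (l : list nat -> Z) (L : list trip) : list Z := map (fun tr => l (thdT tr) - l (fstT tr)) L.

Lemma fits_diffs l L : fits l L (diffs l L).
Proof. induction L; constructor; auto. Qed.

Lemma adm_valid t l : admissible t l ->
  length (diffs l (SW t [])) = edges t /\ allge (diffs l (SW t [])) = true /\
  cond_event t (diffs l (SW t [])) = true /\ Psi t (diffs l (SW t [])) = l.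
Proof.
  intros Hadm. assert (Hl : length (diffs l (SW t [])) = edges t) by (unfold diffs; rewrite length_map; apply len_SW).
  assert (Hc : cond_event t (diffs l (SW t [])) = true).
  { apply cond_iff; auto. intro v. rewrite <- (fits_D _ _ _ v (fits_diffs l _)). apply (proj1 (D_tree t)). }
  split; [auto|split; [|split; [auto|]]].
  - unfold allge, diffs. apply forallb_forall. intros z Hz. apply in_map_iff in Hz as [tr [<- Htr]].
    destruct (good_top t tr Htr) as [ts [j [Ho [Hs [Hj [Hf Hth]]]]]].
    destruct Hadm as [_ [_ H3]]. specialize (H3 _ ts Ho Hs j Hj). cbv zeta in H3.
    change (l (wnb (cenT tr) ts (S j)) >= l (wnb (cenT tr) ts j) - 1) in H3.
    apply Z.leb_le. rewrite Hf, Hth. lia.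
  - apply functional_extensionality. intro v.
    destruct (white_b t v) eqn:E.
    + assert (Hv : In v (Ew t)).
      { apply white_b_iff in E as [Hs He]. destruct v as [|x v'] eqn:Ev; [left; auto|right].
        rewrite <- Ev in *. assert (Hw := proj1 (white_tree t) [] v ltac:(subst; discriminate) He Hs). exact Hw. }
      rewrite (Psi_E t _ l (fits_diffs l _) v Hv). destruct Hadm as [H0 _]. lia.
    + unfold Psi. rewrite E. destruct Hadm as [_ [H2 _]]. symmetry. apply H2.
      intro Hw. apply white_b_iff in Hw. congruence.
Qed.

End SecE.

Section SecF.
Local Open Scope R_scope.

Lemma range_in N z : In z (map (fun k => (Z.of_nat k - Z.of_nat N)%Z) (seq 0 (2 * N + 1))) <->
  (- Z.of_nat N <= z <= Z.of_nat N)%Z.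
Proof.
  rewrite in_map_iff. split.
  - intros [k [<- Hk]]. apply in_seq in Hk. lia.
  - intros Hz. exists (Z.to_nat (z + Z.of_nat N)). split; [lia|]. apply in_seq. lia.
Qed.

Lemma box_in n N xi : In xi (box n N) <->
  length xi = n /\ Forall (fun z => (- Z.of_nat N <= z <= Z.of_nat N)%Z) xi.
Proof.
  revert xi; induction n as [|n IH]; intro xi; simpl.
  - split; [intros [<-|[]]; split; auto|]. intros [Hl _]. destruct xi; [left; auto|discriminate].
  - rewrite in_flat_map. split.
    + intros [z [Hz Hx]]. apply range_in in Hz. apply in_map_iff in Hx as [xi' [<- Hx]].
      apply IH in Hx as [Hl Hf]. simpl. split; auto.
    + intros [Hl Hf]. destruct xi as [|z xi']; [discriminate|]. inversion Hf; subst.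
      exists z. split; [apply range_in; auto|]. apply in_map. apply IH. simpl in Hl. split; auto.
Qed.

Lemma nodup_fm (R : list Z) (B : list (list Z)) : NoDup R -> NoDup B ->
  NoDup (flat_map (fun z => map (cons z) B) R).
Proof.
  induction 1 as [|z R Hz HR IH]; intros HB; simpl; [constructor|].
  apply NoDup_app.
  - apply NoDup_map_NoDup_ForallPairs; auto. intros a b _ _ H. injection H; auto.
  - apply IH; auto.
  - intros a Ha Hb. apply in_map_iff in Ha as [a' [<- _]]. apply in_flat_map in Hb as [z' [Hz' Hb]].
    apply in_map_iff in Hb as [b' [Hb _]]. injection Hb as -> _. contradiction.
Qed.

Lemma box_nodup n N : NoDup (box n N).
Proof.
  induction n as [|n IH]; simpl; [repeat constructor; auto|].
  apply nodup_fm; auto. apply NoDup_map_NoDup_ForallPairs; [|apply seq_NoDup].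
  intros a b _ _ H. lia.
Qed.

Lemma pmf_zero xi : allge xi = false -> pmf xi = 0.
Proof.
  induction xi as [|z xi IH]; simpl; intros H; [discriminate|].
  apply andb_false_iff in H as [H|H].
  - unfold pxi. apply Z.leb_gt in H. replace (z <? -1)%Z with true by (symmetry; apply Z.ltb_lt; lia). ring.
  - rewrite IH; auto. ring.
Qed.

Fixpoint sumN (xi : list Z) : nat := match xi with [] => 0%nat | z :: r => (Z.to_nat (z + 2) + sumN r)%nat end.

Lemma pmf_pow xi : allge xi = true -> pmf xi = (/ 2) ^ (sumN xi) /\
   Z.of_nat (sumN xi) = (sumZ xi + 2 * Z.of_nat (length xi))%Z.
Proof.
  induction xi as [|z xi IH]; simpl; intros H; [split; [reflexivity|lia]|].
  apply andb_true_iff in H as [H1 H2]. destruct (IH H2) as [IH1 IH2]. apply Z.leb_le in H1.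
  split.
  - unfold pxi. replace (z <? -1)%Z with false by (symmetry; apply Z.ltb_ge; lia).
    rewrite IH1, pow_add. reflexivity.
  - unfold sumZ in *. simpl. lia.
Qed.

Lemma pmf_val xi : allge xi = true -> sumZ xi = 0%Z -> pmf xi = (/ 2) ^ (2 * length xi).
Proof.
  intros H1 H2. destruct (pmf_pow xi H1) as [E1 E2]. rewrite E1. f_equal. lia.
Qed.

Lemma sumZ_app l1 l2 : sumZ (l1 ++ l2) = (sumZ l1 + sumZ l2)%Z.
Proof. unfold sumZ. rewrite fold_right_app. induction l1; simpl; [lia|]. unfold sumZ in IHl1. lia. Qed.

Lemma sum_ge l : allge l = true -> (sumZ l >= - Z.of_nat (length l))%Z.
Proof.
  induction l as [|z l IH]; simpl; intros H; [unfold sumZ; simpl; lia|].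
  apply andb_true_iff in H as [H1 H2]. apply Z.leb_le in H1. specialize (IH H2). unfold sumZ in *. simpl. lia.
Qed.

Lemma allge_app l1 l2 : allge (l1 ++ l2) = true -> allge l1 = true /\ allge l2 = true.
Proof. unfold allge. rewrite forallb_app. apply andb_true_iff. Qed.

Lemma bound_box xi : allge xi = true -> sumZ xi = 0%Z -> In xi (box (length xi) (length xi)).
Proof.
  intros Ha Hs. apply box_in. split; auto. apply Forall_forall. intros z Hz.
  destruct (in_split _ _ Hz) as [l1 [l2 ->]].
  destruct (allge_app _ _ Ha) as [A1 A2]. simpl in A2. apply andb_true_iff in A2 as [A3 A2].
  apply Z.leb_le in A3. rewrite sumZ_app in Hs. simpl in Hs. unfold sumZ in Hs at 2. simpl in Hs.
  fold (sumZ l2) in Hs. assert (S1 := sum_ge _ A1). assert (S2 := sum_ge _ A2).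
  rewrite length_app. simpl. lia.
Qed.

Lemma valid_sum t xi : length xi = edges t -> cond_event t xi = true -> sumZ xi = 0%Z.
Proof.
  intros Hl Hc. destruct (consist t xi Hl Hc) as [l Hf].
  rewrite (fits_sum _ _ _ Hf [] (proj1 (chain_top t))), (proj2 (chain_top t)). lia.
Qed.

Lemma valid_box t xi : length xi = edges t -> allge xi = true -> cond_event t xi = true ->
  In xi (box (edges t) (edges t)).
Proof. intros Hl Ha Hc. rewrite <- Hl. apply bound_box; auto. apply (valid_sum t); auto. Qed.

Lemma fsum (A : list Z -> bool) L c :
  (forall xi, In xi L -> A xi = true -> allge xi = true -> pmf xi = c) ->
  fold_right Rplus 0 (map (fun xi => if A xi then pmf xi else 0) L) =
  c * INR (length (filter (fun xi => A xi && allge xi) L)).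
Proof.
  induction L as [|xi L IH]; intros H; [simpl; ring|].
  cbn [map fold_right]. rewrite IH by (intros; apply H; auto; right; auto).
  cbn [filter]. destruct (A xi) eqn:EA; destruct (allge xi) eqn:EG; cbn [andb length].
  - rewrite H; auto; [|left; auto]. rewrite S_INR. ring.
  - rewrite pmf_zero; auto. ring.
  - ring.
  - ring.
Qed.

Lemma box_mono n N M : (N <= M)%nat -> incl (box n N) (box n M).
Proof.
  intros H xi Hx. apply box_in in Hx as [Hl Hf]. apply box_in. split; auto.
  eapply Forall_impl; [|exact Hf]. intros z Hz. simpl in Hz. lia.
Qed.

Lemma prob_const t (A : list Z -> bool) : (forall xi, A xi = true -> cond_event t xi = true) ->
  prob (edges t) A ((/ 2) ^ (2 * edges t) *
     INR (length (filter (fun xi => A xi && allge xi) (box (edges t) (edges t))))).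
Proof.
  intros HA. unfold prob, Un_cv. intros eps He. exists (edges t). intros N HN.
  rewrite (fsum A _ ((/ 2) ^ (2 * edges t))).
  - replace (length (filter (fun xi => A xi && allge xi) (box (edges t) N))) with
        (length (filter (fun xi => A xi && allge xi) (box (edges t) (edges t)))).
    + rewrite Rdist_eq. lra.
    + apply Nat.le_antisymm; apply NoDup_incl_length; try (apply NoDup_filter, box_nodup).
      * intros xi Hx. apply filter_In in Hx as [Hx Hp]. apply filter_In. split; auto.
        apply (box_mono _ (edges t) N); auto.
      * intros xi Hx. apply filter_In in Hx as [Hx Hp]. apply filter_In. split; auto.
        apply andb_true_iff in Hp as [H1 H2]. apply box_in in Hx as [Hl _].
        apply valid_box; auto.
  - intros xi Hx H1 H2. apply box_in in Hx as [Hl _]. rewrite <- Hl.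
    apply pmf_val; auto. apply (valid_sum t); auto.
Qed.

Lemma psums_inj a y1 y2 : psums a y1 = psums a y2 -> y1 = y2.
Proof.
  revert a y2; induction y1 as [|z1 y1 IH]; intros a [|z2 y2] H; simpl in H; auto.
  - injection H as H. destruct y2; discriminate.
  - injection H as H. destruct y1; discriminate.
  - injection H as H. assert (Ez : z1 = z2).
    { destruct y1, y2; simpl in H; injection H; intros; lia. }
    subst z2. f_equal. apply (IH (a + z1)%Z); auto.
Qed.

Lemma card_gen t (P : list Z -> bool) (Q : (list nat -> Z) -> Prop) :
  (forall xi, P xi = true -> cond_event t xi = true) ->
  (forall xi, length xi = edges t -> allge xi = true -> cond_event t xi = true -> (P xi = true <-> Q (Psi t xi))) ->
  has_card (fun l => admissible t l /\ Q l)
    (length (filter (fun xi => P xi && allge xi) (box (edges t) (edges t)))).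
Proof.
  intros HP HQ. exists (map (Psi t) (filter (fun xi => P xi && allge xi) (box (edges t) (edges t)))).
  split; [|split; [apply length_map|]].
  - apply NoDup_map_NoDup_ForallPairs; [|apply NoDup_filter, box_nodup].
    intros a b Ha Hb Hab.
    apply filter_In in Ha as [Ha Pa]. apply filter_In in Hb as [Hb Pb].
    apply andb_true_iff in Pa as [Pa _]. apply andb_true_iff in Pb as [Pb _].
    apply box_in in Ha as [La _]. apply box_in in Hb as [Lb _].
    apply (psums_inj 0%Z). fold (walk a) (walk b).
    rewrite <- (map_Psi t a), <- (map_Psi t b); auto. rewrite Hab. reflexivity.
  - intro l. rewrite in_map_iff. split.
    + intros [xi [<- Hx]]. apply filter_In in Hx as [Hx Px]. apply andb_true_iff in Px as [Px Ax].
      apply box_in in Hx as [Lx _]. split; [apply Psi_adm; auto|]. apply HQ; auto.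
    + intros [Hadm Hq]. destruct (adm_valid t l Hadm) as [Hl [Ha [Hc He]]].
      exists (diffs l (SW t [])). split; auto. apply filter_In. split; [apply valid_box; auto|].
      apply andb_true_iff. split; auto. apply HQ; auto. rewrite He. auto.
Qed.

Lemma bsum_zeros L k v : bsum L (repeat 0%Z k) v = 0%Z.
Proof.
  revert k; induction L as [|tr L IH]; intros [|k]; simpl; auto. rewrite IH.
  destruct (list_eq_dec Nat.eq_dec (cenT tr) v); lia.
Qed.

Lemma has_card_ext {A : Type} (P P' : A -> Prop) k : (forall a, P a <-> P' a) -> has_card P k -> has_card P' k.
Proof. intros H [s [H1 [H2 H3]]]. exists s. split; auto. split; auto. intro a. rewrite H3. apply H. Qed.

End SecF.


Theorem mainTheorem3 (n : nat) (t : tree) (Hn : edges t = n) :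
  exists NL : nat,
    has_card (admissible t) NL /\ (0 < NL)%nat /\
  exists PE : R,
    prob n (cond_event t) PE /\ 0 < PE /\
  forall x : list Z, length x = S n ->
    exists (K : nat) (PX : R),
      has_card (fun l => admissible t l /\ map l (cseq t) = x) K /\
      prob n (fun xi => andb (list_Z_eqb (walk xi) x) (cond_event t xi)) PX /\
      PX / PE = INR K / INR NL.
Proof.
  subst n.
  assert (Hc : 0 < (/ 2) ^ (2 * edges t)) by (apply pow_lt; lra).
  set (NL := length (filter (fun xi => cond_event t xi && allge xi) (box (edges t) (edges t)))).
  assert (HNL : (0 < NL)%nat).
  { unfold NL.
    assert (Hin : In (repeat 0%Z (edges t)) (filter (fun xi => cond_event t xi && allge xi) (box (edges t) (edges t)))).
    { apply filter_In. split.
      - apply box_in. split; [apply repeat_length|]. apply Forall_forall. intros z Hz.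
        apply repeat_spec in Hz. lia.
      - apply andb_true_iff. split.
        + apply cond_iff; [apply repeat_length|]. intro v. apply bsum_zeros.
        + unfold allge. apply forallb_forall. intros z Hz. apply repeat_spec in Hz. subst. reflexivity. }
    destruct (filter _ _); [contradiction|]. simpl. lia. }
  exists NL. split.
  { apply (has_card_ext (fun l => admissible t l /\ True)); [tauto|]. apply card_gen; auto. intros; tauto. }
  split; auto.
  exists ((/ 2) ^ (2 * edges t) * INR NL). split; [apply prob_const; auto|].
  split; [apply Rmult_lt_0_compat; auto; apply lt_0_INR; auto|].
  intros x Hx.
  assert (HP : forall xi, (list_Z_eqb (walk xi) x && cond_event t xi)%bool = true -> cond_event t xi = true).
  { intros xi H. apply andb_true_iff in H; tauto. }
  eexists. eexists. split; [|split; [apply (prob_const t (fun xi => list_Z_eqb (walk xi) x && cond_event t xi)%bool); auto|]].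
  - apply (card_gen t (fun xi => list_Z_eqb (walk xi) x && cond_event t xi)%bool); auto.
    intros xi Hl Ha Hc'. rewrite cseq_eq, map_Psi by auto. rewrite Hc', andb_true_r.
    unfold list_Z_eqb. destruct (list_eq_dec Z.eq_dec (walk xi) x); split; congruence.
  - field. split; [|lra]. apply not_0_INR. lia.
Qed.
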